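(* Let $r\in[0,1]^n$ with $r\neq 0$, let $k\in\{1,\dots,n\}$, and let $D:\{1,\dots,n\}\to(0,\infty)$ be non-increasing. Let $\sigma_r$ be a permutation ordering $r$, and define the NDCG loss of a permutation $\sigma$ by $$\mathcal L(\sigma)=\frac{\sum_{i=1}^k r(\sigma_r(i))D(i)-\sum_{i=1}^k r(\sigma(i))D(i)}{\sum_{i=1}^k r(\sigma_r(i))D(i)}.$$ Let $G(0)=0$, $G(i)=\sum_{j=1}^i D(j)$, and $f(X)=G(\min\{|X|,k\})$ for $X\subseteq V$. Then $f$ is submodular, and for every permutation $\sigma$ of $V$, $$\mathcal L(\sigma)=\frac{d_{\hat f}(r\|\sigma)}{\sum_{i=1}^k r(\sigma_r(i))D(i)}.$$
   Context: Let $V=\{1,\dots,n\}$. A permutation $\sigma$ is a bijection $V\to V$, where $\sigma(i)$ is the element placed at rank $i$. Write $S^\sigma_0=\emptyset$, $S^\sigma_j=\{\sigma(1),\dots,\sigma(j)\}$. For $f:2^V\to\mathbb{R}$ define $h^f_\sigma\in\mathbb{R}^n$ by $h^f_\sigma(\sigma(j))=f(S^\sigma_j)-f(S^\sigma_{j-1})$. For $x\in\mathbb{R}^n$, $\sigma_x$ orders $x$ if $x(\sigma_x(1))\ge\cdots\ge x(\sigma_x(n))$; the Lovász extension is $\hat f(x)=\langle x,h^f_{\sigma_x}\rangle$ (independent of the choice of $\sigma_x$). $f$ is submodular if $f(S)+f(T)\ge f(S\cup T)+f(S\cap T)$ for all $S,T$. The LB divergence is $d_{\hat f}(x\|\sigma)=\hat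 f(x)-\langle x,h^f_\sigma\rangle$ for $x\in[0,1]^n$. *)

(* Defs.v *)
(* V = {1..n} is rendered as 'I_n (0-indexed: rank i+1 of the
   paper is the ordinal i). Reals are a generic realFieldType R. *)
From HB Require Import structures.
From mathcomp Require Import all_boot all_order all_algebra all_fingroup.
Set Implicit Arguments. Unset Strict Implicit. Unset Printing Implicit Defensive.
Import Order.TTheory GRing.Theory Num.Theory.
Local Open Scope ring_scope.

Section Defs.
Variables (R : realFieldType) (n : nat).

Definition prefix (s : {perm 'I_n}) (j : nat) : {set 'I_n} :=
  [set s i | i : 'I_n & (i < j)%N].

(* h^f_sigma(sigma(j)) = f(S_j) - f(S_{j-1}) *)
Definition hvec (f : {set 'I_n} -> R) (s : {perm 'I_n}) (v : 'I_n) : R :=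
  let j := nat_of_ord ((s^-1)%g v) in f (prefix s j.+1) - f (prefix s j).

Definition dotp (x y : 'I_n -> R) : R := \sum_(i < n) x i * y i.

Definition ordersb (x : 'I_n -> R) (s : {perm 'I_n}) : bool :=
  [forall i : 'I_n, forall j : 'I_n, (i <= j)%N ==> (x (s j) <= x (s i))].

Definition sigma_of (x : 'I_n -> R) : {perm 'I_n} :=
  odflt 1%g [pick s : {perm 'I_n} | ordersb x s].

Definition lovasz (f : {set 'I_n} -> R) (x : 'I_n -> R) : R :=
  dotp x (hvec f (sigma_of x)).

Definition LBdiv (f : {set 'I_n} -> R) (x : 'I_n -> R) (s : {perm 'I_n}) : R :=
  lovasz f x - dotp x (hvec f s).

Definition submodular (f : {set 'I_n} -> R) : Prop :=
  forall S T : {set 'I_n}, f (S :|: T) + f (S :&: T) <= f S + f T.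

Definition dcg (k : nat) (D r : 'I_n -> R) (s : {perm 'I_n}) : R :=
  \sum_(i < n | (i < k)%N) r (s i) * D i.

Definition ndcg_loss (k : nat) (D r : 'I_n -> R) (sr s : {perm 'I_n}) : R :=
  (dcg k D r sr - dcg k D r s) / dcg k D r sr.

Definition Gsum (D : 'I_n -> R) (i : nat) : R := \sum_(j < n | (j < i)%N) D j.

Definition fNDCG (k : nat) (D : 'I_n -> R) (X : {set 'I_n}) : R :=
  Gsum D (minn #|X| k).

End Defs.

(* Main.v *)
Require Import Defs.
From HB Require Import structures.
From mathcomp Require Import all_boot all_order all_algebra all_fingroup.
From mathcomp Require Import zify lra.
Import Order.TTheory GRing.Theory Num.Theory.
Local Open Scope ring_scope.

Section Aux.
Variables (R : realFieldType) (n : nat).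

Lemma card_lt (j : nat) : (j <= n)%N -> #|[set i : 'I_n | (i < j)%N]| = j.
Proof.
move=> hj.
have -> : [set i : 'I_n | (i < j)%N] = [set widen_ord hj i | i in 'I_j].
  apply/setP => x; rewrite inE; apply/idP/imsetP.
    move=> hx; exists (Ordinal hx) => //; exact: val_inj.
  by case=> y _ ->; rewrite /= ltn_ord.
rewrite card_imset ?card_ord //; by move=> a b /(congr1 val) /= /val_inj.
Qed.

Lemma card_prefix (s : {perm 'I_n}) j : (j <= n)%N -> #|Defs.prefix s j| = j.
Proof.
move=> hj; rewrite /Defs.prefix.
have -> : [set s i | i : 'I_n & (i < j)%N] = s @: [set i : 'I_n | (i < j)%N].
  by apply/setP => x; apply/imsetP/imsetP; case=> y hy ->; exists y => //; rewrite ?inE in hy *.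
by rewrite card_imset ?card_lt //; exact: perm_inj.
Qed.

End Aux.

Section Main.
Variables (R : realFieldType) (n : nat) (k : nat) (D : 'I_n -> R).

Definition g (m : nat) : R := Gsum D (minn m k).
Definition incr (m : nat) : R := \sum_(j < n | (j == m :> nat) && (m < k)%N) D j.

Lemma g_step m : g m.+1 = g m + incr m.
Proof.
rewrite /g /Gsum (bigID (fun j : 'I_n => (j == m :> nat))) /= addrC.
congr (_ + _); apply: eq_bigl => j /=; apply/idP/idP; lia.
Qed.

Hypothesis Dpos : forall i, 0 < D i.
Hypothesis Dmono : forall i j : 'I_n, (i <= j)%N -> D j <= D i.
Hypothesis kn : (k <= n)%N.

Lemma incr_mono m m' : (m <= m')%N -> incr m' <= incr m.
Proof.
move=> hm; case: (ltnP m' k) => h.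
  have hm'n : (m' < n)%N by apply: leq_trans h kn.
  have hmn : (m < n)%N by apply: leq_ltn_trans hm hm'n.
  have hmk : (m < k)%N by apply: leq_ltn_trans hm h.
  rewrite /incr h hmk.
  rewrite (eq_bigl (fun j => j == Ordinal hm'n)) ?big_pred1_eq; last by move=> j; rewrite andbT.
  rewrite (eq_bigl (fun j => j == Ordinal hmn)) ?big_pred1_eq; last by move=> j; rewrite andbT.
  by apply: Dmono.
rewrite {1}/incr big_pred0; last by move=> j; rewrite ltnNge h andbF.
by apply: sumr_ge0 => i _; apply: ltW.
Qed.

Lemma g_concave a t u : g (a + t + u) + g a <= g (a + t) + g (a + u).
Proof.
elim: t => [|t IH]; first by rewrite !addn0 addrC.
rewrite addnS addSn !g_step.
have hi := incr_mono _ _ (leq_addr u (a + t)).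
move: IH hi; set x1 := g _; set x2 := g _; set x3 := g _; set x4 := g _; set y1 := incr _; set y2 := incr _.
move=> IH hi; lra.
Qed.

Lemma fNDCG_submod : submodular (fNDCG k D).
Proof.
move=> S T; rewrite /fNDCG -!/(g _).
have hb : (#|S :&: T| <= #|S|)%N by apply: subset_leq_card; apply: subsetIl.
have hc : (#|S :&: T| <= #|T|)%N by apply: subset_leq_card; apply: subsetIr.
have hU := cardsUI S T.
have -> : #|S :|: T| = (#|S :&: T| + (#|S| - #|S :&: T|) + (#|T| - #|S :&: T|))%N by lia.
have {2}-> : #|S| = (#|S :&: T| + (#|S| - #|S :&: T|))%N by lia.
have {2}-> : #|T| = (#|S :&: T| + (#|T| - #|S :&: T|))%N by lia.
exact: g_concave.
Qed.

Lemma fNDCG_prefix (s : {perm 'I_n}) j : (j <= n)%N -> fNDCG k D (Defs.prefix s j) = g j.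
Proof. by move=> hj; rewrite /fNDCG card_prefix. Qed.

Lemma dotp_dcg (r : 'I_n -> R) (s : {perm 'I_n}) :
  dotp r (hvec (fNDCG k D) s) = dcg k D r s.
Proof.
rewrite /dotp (reindex_inj (@perm_inj _ s)) /dcg [RHS]big_mkcond /=.
apply: eq_bigr => i _; rewrite /hvec permK.
rewrite !fNDCG_prefix ?ltn_ord ?(ltnW (ltn_ord i)) // g_step addrC addKr.
case: (ltnP i k) => h; rewrite /incr.
  by rewrite h (eq_bigl (fun j => j == i)) ?big_pred1_eq // => j; rewrite andbT.
by rewrite big_pred0 ?mulr0 // => j; rewrite ltnNge h andbF.
Qed.

End Main.

Section Sort.
Variables (R : realFieldType) (n : nat).

Lemma ordersP (x : 'I_n -> R) s : ordersb x s ->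
  forall a b : 'I_n, (a <= b)%N -> x (s b) <= x (s a).
Proof. by move=> h a b hab; move: h => /forallP/(_ a)/forallP/(_ b)/implyP; apply. Qed.

Lemma perm_enum_map (s : {perm 'I_n}) : perm_eq (map s (enum 'I_n)) (enum 'I_n).
Proof.
apply: uniq_perm; first by rewrite (map_inj_uniq (@perm_inj _ s)) enum_uniq.
  exact: enum_uniq.
move=> y; rewrite mem_enum; apply/mapP; exists ((s^-1)%g y); rewrite ?mem_enum ?permKV //.
Qed.

Lemma ord_uniq (x : 'I_n -> R) s1 s2 : ordersb x s1 -> ordersb x s2 ->
  forall i, x (s1 i) = x (s2 i).
Proof.
move=> h1 h2 i.
pose le := (fun a b : R => b <= a).
have tr : transitive le by move=> y a z /= p q; rewrite /le; exact: le_trans q p.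
have an : antisymmetric le by move=> a b /andP[p q]; rewrite /le in p q; apply: le_anti; rewrite q p.
have srt : forall s, ordersb x s -> sorted le [seq x (s j) | j <- enum 'I_n].
  move=> s hs; rewrite sorted_pairwise //; apply/(pairwiseP 0) => a b.
  rewrite !inE size_map size_enum_ord => ha hb hab.
  rewrite !(nth_map i) -?enumT ?size_enum_ord //.
  have -> : nth i (enum 'I_n) a = Ordinal ha by apply: val_inj; rewrite /= nth_enum_ord.
  have -> : nth i (enum 'I_n) b = Ordinal hb by apply: val_inj; rewrite /= nth_enum_ord.
  rewrite /le; exact: (ordersP _ _ hs (Ordinal ha) (Ordinal hb) (ltnW hab)).
have E : [seq x (s1 j) | j <- enum 'I_n] = [seq x (s2 j) | j <- enum 'I_n].
  apply: (sorted_eq tr an (srt _ h1) (srt _ h2)).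
  rewrite (map_comp x s1) (map_comp x s2); apply: perm_map.
  by apply: (perm_trans (perm_enum_map s1)); rewrite perm_sym perm_enum_map.
have := congr1 (fun l => nth 0 l i) E => /=.
by rewrite !(nth_map i) -?enumT ?size_enum_ord ?ltn_ord // nth_ord_enum.
Qed.

End Sort.

Theorem mainTheorem11 (R : realFieldType) (n : nat) (r : 'I_n -> R) (k : nat)
  (D : 'I_n -> R) (sr : {perm 'I_n}) :
  (forall i, 0 <= r i <= 1) ->
  ~ (forall i, r i = 0) ->
  (1 <= k <= n)%N ->
  (forall i, 0 < D i) ->
  (forall i j : 'I_n, (i <= j)%N -> D j <= D i) ->
  ordersb r sr ->
  submodular (fNDCG k D) /\
  (forall s : {perm 'I_n},
     ndcg_loss k D r sr s = LBdiv (fNDCG k D) r s / dcg k D r sr).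
Proof.
move=> _ _ /andP[_ kn] Dp Dm hsr; split; first exact: (fNDCG_submod _ _ _ _ Dp Dm kn).
move=> s; rewrite /ndcg_loss /LBdiv /lovasz !dotp_dcg.
have hsig : ordersb r (sigma_of r).
  rewrite /sigma_of; case: pickP => [s' -> //|H].
  by move: (H sr); rewrite hsr.
suff -> : dcg k D r (sigma_of r) = dcg k D r sr by [].
by rewrite /dcg; apply: eq_bigr => i _; rewrite (ord_uniq _ _ _ _ _ hsig hsr i).
Qed.
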